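(* Let $\Omega$ be a measurable space with reference measure $\mathrm{d}\mathbf{y}$, let $q$ be a probability density on $\Omega$, and let $f_{\bm{\theta}}:\Omega\to\mathbb{R}$, $\bm{\theta}\in\Theta$, satisfy $|f_{\bm{\theta}}(\mathbf{y})-\log q(\mathbf{y})|\le C$ for all $\mathbf{y}\in\Omega$ and all $\bm{\theta}\in\Theta$. Fix data $\mathbf{y}_1,\ldots,\mathbf{y}_n\in\Omega$, an integer $m\ge1$ and reference points $\bm{r}_1,\ldots,\bm{r}_m\in\Omega$, and define $$\mathcal{M}(\bm{\theta},\nu)=\sum_{i=1}^n\{f_{\bm{\theta}}(\mathbf{y}_i)+\nu\}-n\int_\Omega\exp\{f_{\bm{\theta}}(\mathbf{y})+\nu\}\,\mathrm{d}\mathbf{y},$$ $$\mathcal{R}^m(\bm{\theta},\nu)=\sum_{i=1}^n\log\left[\frac{n\exp\{f_{\bm{\theta}}(\mathbf{y}_i)+\nu\}}{n\exp\{f_{\bm{\theta}}(\mathbf{y}_i)+\nu\}+mq(\mathbf{y}_i)}\right]+\sum_{j=1}^m\log\left[\frac{mq(\bm{r}_j)}{n\exp\{f_{\bm{\theta}}(\bm{r}_j)+\nu\}+mq(\bm{r}_j)}\right].$$ Then there exists a bounded interval $I\subset\mathbb{R}$ such that, for every $\bm{\theta}\in\Theta$, the maximum of both functions $\nu\mapsto\mathcal{M}(\bm{\theta},\nu)$ and $\nu\mapsto\mathcal{R}^m(\bm{\theta},\nu)$ is attained in $I$. *)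

(* Defs.v *)
From HB Require Import structures.
From mathcomp Require Import all_boot all_order all_algebra.
From mathcomp Require Import all_classical all_reals all_analysis.
Set Implicit Arguments. Unset Strict Implicit. Unset Printing Implicit Defensive.
Import Order.TTheory GRing.Theory Num.Theory.
Local Open Scope ring_scope.

Definition Mobj {d} {T : measurableType d} {R : realType}
  (mu : {measure set T -> \bar R}) (g : T -> R) (n : nat) (ys : 'I_n -> T)
  (nu : R) : \bar R :=
  ((\sum_(i < n) (g (ys i) + nu))%:E
   - (n%:R)%:E * \int[mu]_(y in setT) (expR (g y + nu))%:E)%E.

Definition Rmobj {T : Type} {R : realType} (q : T -> R) (g : T -> R)
  (n : nat) (ys : 'I_n -> T) (m : nat) (rs : 'I_m -> T) (nu : R) : R :=
  \sum_(i < n) ln (n%:R * expR (g (ys i) + nu)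
                    / (n%:R * expR (g (ys i) + nu) + m%:R * q (ys i)))
  + \sum_(j < m) ln (m%:R * q (rs j)
                    / (n%:R * expR (g (rs j) + nu) + m%:R * q (rs j))).

(* Main.v *)
From HB Require Import structures.
From mathcomp Require Import all_boot all_order all_algebra.
From mathcomp Require Import all_classical all_reals all_analysis.
From mathcomp Require Import lra measurable_realfun.
Require Import Defs.
Import Order.TTheory GRing.Theory Num.Theory numFieldNormedType.Exports.
Local Open Scope ring_scope.

Section H.
Variable R : realType.

Lemma low_ln (x y k : R) : 0 < x -> 0 < y -> 0 <= k -> y <= k * x ->
  - ln (1 + k) <= ln (x / (x + y)).
Proof.
move=> x0 y0 k0 yk.
have k1 : 0 < 1 + k by lra.
rewrite -lnV ?posrE //.
have xy : 0 < x + y by lra.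
rewrite ler_ln ?posrE ?invr_gt0 ?divr_gt0 //.
have -> : x / (x + y) = ((x + y) / x)^-1 by rewrite invf_div.
rewrite lef_pV2 ?posrE ?divr_gt0 //.
rewrite ler_pdivrMr //; nra.
Qed.

Lemma up_ln0 (x y : R) : 0 < x -> 0 < y -> ln (x / (x + y)) <= 0.
Proof.
move=> x0 y0; apply: ln_le0; rewrite ler_pdivrMr; lra.
Qed.

Lemma up_ln (x y w : R) : 0 < x -> 0 < y -> 0 < w -> x <= w * (x + y) ->
  ln (x / (x + y)) <= ln w.
Proof.
move=> x0 y0 w0 h.
rewrite ler_ln ?posrE ?divr_gt0 //; last lra.
rewrite ler_pdivrMr //; lra.
Qed.

Lemma cont_sum (n : nat) (F : 'I_n -> R -> R) (x : R) :
  (forall i, {for x, continuous (fun y : R => F i y)}) ->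
  {for x, continuous (fun nu => \sum_(i < n) F i nu)}.
Proof.
elim: n F => [|n IH] F hF.
  have -> : (fun nu => \sum_(i < 0) F i nu) = (fun _ => 0).
    by apply: funext => nu; rewrite big_ord0.
  exact: cvg_cst.
have -> : (fun nu => \sum_(i < n.+1) F i nu) =
  (fun nu => \sum_(i < n) F (widen_ord (leqnSn n) i) nu + F ord_max nu).
  by apply: funext => nu; rewrite big_ord_recr.
apply: (@continuousD _ R^o _ (fun nu => \sum_(i < n) F (widen_ord (leqnSn n) i) nu) (F ord_max)).
  exact: IH.
exact: hF.
Qed.

Lemma cont_inner (a b c : R) (x : R) :
  {for x, continuous (fun nu => a * expR (c + nu) + b)}.
Proof.
apply: (@continuousD _ R^o).
  apply: (@continuousM _ _ (fun _ => a) (fun nu => expR (c + nu)) x).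
    exact: cvg_cst.
  apply: (@continuous_comp _ _ _ (fun nu => c + nu) expR).
    apply: (@continuousD _ R^o). exact: cvg_cst. exact: cvg_id.
  exact: continuous_expR.
exact: cvg_cst.
Qed.


Lemma cont_ae (a c x : R) : {for x, continuous (fun nu => a * expR (c + nu))}.
Proof.
apply: (@continuousM _ _ (fun _ => a) (fun nu => expR (c + nu)) x).
  exact: cvg_cst.
apply: (@continuous_comp _ _ _ (fun nu => c + nu) expR).
  apply: (@continuousD _ R^o). exact: cvg_cst. exact: cvg_id.
exact: continuous_expR.
Qed.

Lemma cont_termi (a b c x : R) : 0 < a -> 0 < b ->
  {for x, continuous (fun nu => ln (a * expR (c + nu) / (a * expR (c + nu) + b)))}.
Proof.
move=> a0 b0.
have pos nu : 0 < a * expR (c + nu) + b by rewrite addr_gt0 // mulr_gt0 // expR_gt0.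
suff [hf hg] : {for x, continuous (fun nu => a * expR (c + nu) / (a * expR (c + nu) + b))} /\ {for ((fun nu => a * expR (c + nu) / (a * expR (c + nu) + b)) x), continuous (@ln R)}.
  exact: (continuous_comp hf hg).
split.
  apply: (@continuousM _ _ (fun nu => a * expR (c + nu)) (fun nu => (a * expR (c + nu) + b)^-1) x).
    exact: cont_ae.
  apply: continuousV; first by rewrite gt_eqF.
  exact: cont_inner.
apply: continuous_ln => /=; by rewrite divr_gt0 ?mulr_gt0 ?expR_gt0.
Qed.

Lemma cont_termj (a b c x : R) : 0 < a -> 0 < b ->
  {for x, continuous (fun nu => ln (b / (a * expR (c + nu) + b)))}.
Proof.
move=> a0 b0.
have pos nu : 0 < a * expR (c + nu) + b by rewrite addr_gt0 // mulr_gt0 // expR_gt0.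
suff [hf hg] : {for x, continuous (fun nu => b / (a * expR (c + nu) + b))} /\ {for ((fun nu => b / (a * expR (c + nu) + b)) x), continuous (@ln R)}.
  exact: (continuous_comp hf hg).
split.
  apply: (@continuousM _ _ (fun nu => b) (fun nu => (a * expR (c + nu) + b)^-1) x).
    exact: cvg_cst.
  apply: continuousV; first by rewrite gt_eqF.
  exact: cont_inner.
apply: continuous_ln => /=; by rewrite divr_gt0.
Qed.

Lemma Ebound (g Q C nu : R) : 0 < Q -> `|g - ln Q| <= C ->
  Q * expR (nu - C) <= expR (g + nu) <= Q * expR (C + nu).
Proof.
move=> Q0; rewrite ler_norml => /andP[h1 h2].
rewrite -(lnK Q0) -!expRD !ler_expR; apply/andP; split; lra.
Qed.

Lemma cont_add (f h : R -> R) (x : R) :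
  {for x, continuous (fun y : R => f y)} -> {for x, continuous (fun y : R => h y)} ->
  {for x, continuous (fun y : R => f y + h y)}.
Proof. move=> hf hh; exact: (@continuousD _ R^o _ f h x). Qed.

End H.
Lemma Rpart (R : realType) (T : Type) (q g : T -> R) (C : R)
  (q_pos : forall y, 0 < q y) (gb : forall y, `|g y - ln (q y)| <= C)
  (n m : nat) (ys : 'I_n.+1 -> T) (rs : 'I_m.+1 -> T) :
  let N := (n.+1)%:R : R in let M := (m.+1)%:R : R in
  let K := N * ln (1 + M * expR C) + M * ln (1 + N * expR C) in
  exists2 nu, - (ln N + C + K) <= nu <= ln M + C + K &
    forall nu', Rmobj q g ys rs nu' <= Rmobj q g ys rs nu.
Proof.
move=> N M K.
have C0 : 0 <= C by apply: le_trans (gb (ys ord0)).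
have N1 : 1 <= N by rewrite ler1n.
have M1 : 1 <= M by rewrite ler1n.
have eC : 0 < expR C := expR_gt0 C.
have L1 : 0 <= ln (1 + M * expR C) by apply: ln_ge0; rewrite lerDl mulr_ge0 // ?ltW //; lra.
have L2 : 0 <= ln (1 + N * expR C) by apply: ln_ge0; rewrite lerDl mulr_ge0 // ?ltW //; lra.
have K0 : 0 <= K by rewrite /K addr_ge0 // mulr_ge0 //; lra.
have lN : 0 <= ln N by apply: ln_ge0.
have lM : 0 <= ln M by apply: ln_ge0.
set phi := fun nu => Rmobj q g ys rs nu.
have Epos y nu : 0 < expR (g y + nu) := expR_gt0 _.
have phi0 : - K <= phi 0.
  rewrite /phi /Rmobj /K opprD.
  apply: lerD.
    have -> : - (N * ln (1 + M * expR C)) = \sum_(i < n.+1) - ln (1 + M * expR C).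
      by rewrite sumr_const card_ord -mulr_natl mulrN.
    apply: ler_sum => i _.
    have Q0 := q_pos (ys i).
    have /andP[Eb _] := @Ebound _ _ _ _ 0 Q0 (gb (ys i)).
    have E0 := Epos (ys i) 0.
    apply: low_ln; first by rewrite mulr_gt0 //; lra.
    - by rewrite mulr_gt0 //; lra.
    - by rewrite mulr_ge0 //; lra.
    have h1 : q (ys i) <= expR C * expR (g (ys i) + 0).
      have e1 : expR (0 - C) * expR C = 1 by rewrite -expRD subrK expR0.
      have := ler_wpM2r (ltW eC) Eb.
      by rewrite -mulrA e1 mulr1 mulrC.
    have h2 : M * q (ys i) <= M * (expR C * expR (g (ys i) + 0)) by apply: ler_wpM2l => //; lra.
    apply: (le_trans h2); rewrite -mulrA; apply: ler_wpM2l; first lra.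
    rewrite mulrA [expR C * N]mulrC -mulrA ler_peMl //.
  have -> : - (M * ln (1 + N * expR C)) = \sum_(j < m.+1) - ln (1 + N * expR C).
    by rewrite sumr_const card_ord -mulr_natl mulrN.
  apply: ler_sum => j _.
  have Q0 := q_pos (rs j).
  have /andP[_ Eb] := @Ebound _ _ _ _ 0 Q0 (gb (rs j)).
  have E0 := Epos (rs j) 0.
  rewrite [_ + m.+1%:R * _]addrC; apply: low_ln; first by rewrite mulr_gt0 //; lra.
  - by rewrite mulr_gt0 //; lra.
  - by rewrite mulr_ge0 //; lra.
  rewrite [C + 0]addr0 in Eb.
  have h2 : N * expR (g (rs j) + 0) <= N * (q (rs j) * expR C) by apply: ler_wpM2l => //; lra.
  apply: (le_trans h2); rewrite -mulrA; apply: ler_wpM2l; first lra.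
  rewrite mulrC [m.+1%:R * _]mulrC mulrA ler_peMr // mulr_ge0 // ltW // q_pos.
have up_hi nu : ln M + C + K <= nu -> phi nu <= - K.
  move=> hnu; rewrite /phi /Rmobj [\sum_(j < m.+1) _](bigD1 ord0) //=.
  rewrite -[- K]add0r; apply: lerD.
    apply: sumr_le0 => i _; apply: up_ln0.
      by rewrite mulr_gt0 //; lra.
    by rewrite mulr_gt0 //; lra.
  apply: (@le_trans _ _ (ln M + C - nu + 0)); last lra.
  apply: lerD; last first.
    apply: sumr_le0 => j _; rewrite [_ + m.+1%:R * _]addrC; apply: up_ln0.
      by rewrite mulr_gt0 //; lra.
    by rewrite mulr_gt0 //; lra.
  set r := rs ord0.
  have Q0 := q_pos r.
  have /andP[Eb _] := @Ebound _ _ _ _ nu Q0 (gb r).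
  have E0 := Epos r nu.
  rewrite -(expRK (ln M + C - nu)) [_ + m.+1%:R * _]addrC.
  have ew : expR (ln M + C - nu) = M * expR (C - nu).
    by rewrite -addrA [in LHS]expRD lnK // posrE; lra.
  have e1 : expR (C - nu) * expR (nu - C) = 1.
    rewrite -expRD; have -> : C - nu + (nu - C) = 0 by lra.
    exact: expR0.
  have eCn : 0 < expR (C - nu) := expR_gt0 _.
  apply: up_ln; first by rewrite mulr_gt0 //; lra.
  - by rewrite mulr_gt0 //; lra.
  - exact: expR_gt0.
  rewrite ew.
  have hq : q r <= expR (C - nu) * expR (g r + nu).
    have := ler_wpM2l (ltW eCn) Eb.
    by rewrite mulrCA e1 mulr1.
  have hh : expR (C - nu) * expR (g r + nu) <=
      expR (C - nu) * (m.+1%:R * q r + n.+1%:R * expR (g r + nu)).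
    apply: ler_wpM2l; first lra.
    (try rewrite -/N); (try rewrite -/M); nra.
  rewrite -mulrA; apply: ler_wpM2l; first lra.
  exact: le_trans hq hh.
have up_lo nu : nu <= - (ln N + C + K) -> phi nu <= - K.
  move=> hnu; rewrite /phi /Rmobj [\sum_(i < n.+1) _](bigD1 ord0) //=.
  rewrite -[- K]addr0; apply: lerD; last first.
    apply: sumr_le0 => j _; rewrite [_ + m.+1%:R * _]addrC; apply: up_ln0.
      by rewrite mulr_gt0 //; lra.
    by rewrite mulr_gt0 //; lra.
  apply: (@le_trans _ _ (ln N + C + nu + 0)); last lra.
  apply: lerD; last first.
    apply: sumr_le0 => i _; apply: up_ln0.
      by rewrite mulr_gt0 //; lra.
    by rewrite mulr_gt0 //; lra.
  set r := ys ord0.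
  have Q0 := q_pos r.
  have /andP[_ Eb] := @Ebound _ _ _ _ nu Q0 (gb r).
  have E0 := Epos r nu.
  rewrite -(expRK (ln N + C + nu)).
  have ew : expR (ln N + C + nu) = N * expR (C + nu).
    by rewrite -addrA [in LHS]expRD lnK // posrE; lra.
  have eCp : 0 < expR (C + nu) := expR_gt0 _.
  apply: up_ln; first by rewrite mulr_gt0 //; lra.
  - by rewrite mulr_gt0 //; lra.
  - exact: expR_gt0.
  rewrite ew -mulrA; apply: ler_wpM2l; first lra.
  apply: (le_trans Eb); rewrite mulrC; apply: ler_wpM2l; first lra.
  (try rewrite -/N); (try rewrite -/M); nra.
have cphi : continuous phi.
  move=> x; rewrite /phi /Rmobj.
  have N0 : 0 < N by lra.
  have M0 : 0 < M by lra.
  have hi := @cont_sum R n.+1 _ x (fun i : 'I_n.+1 => @cont_termi R N (M * q (ys i)) (g (ys i)) x N0 (mulr_gt0 M0 (q_pos _))).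
  have hj := @cont_sum R m.+1 _ x (fun j : 'I_m.+1 => @cont_termj R N (M * q (rs j)) (g (rs j)) x N0 (mulr_gt0 M0 (q_pos _))).
  exact (@cont_add R _ _ x hi hj).
have AB : - (ln N + C + K) <= ln M + C + K by lra.
have [c cI cmax] := @EVT_max R phi _ _ AB (continuous_subspaceT cphi).
move: (cI); rewrite in_itv /= => cI'.
exists c => // nu'.
have p0c : phi 0 <= phi c by apply: cmax; rewrite in_itv /=; apply/andP; split; lra.
have [hB|hB] := leP nu' (ln M + C + K); last first.
  exact: le_trans (up_hi _ (ltW hB)) (le_trans phi0 p0c).
have [hA|hA] := leP (- (ln N + C + K)) nu'.
  by apply: cmax; rewrite in_itv /= hA hB.
exact: le_trans (up_lo _ (ltW hA)) (le_trans phi0 p0c).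
Qed.

Lemma Mpart (d : measure_display) (T : measurableType d) (R : realType)
  (mu : {measure set T -> \bar R}) (q : T -> R)
  (q_meas : measurable_fun setT q)
  (q_pos : forall y : T, 0 < q y)
  (q_prob : (\int[mu]_(y in setT) (q y)%:E = 1)%E)
  (g : T -> R) (C : R) (g_meas : measurable_fun setT g)
  (gb : forall y, `|g y - ln (q y)| <= C) (n : nat) (ys : 'I_n.+1 -> T) :
  exists2 nu : R, - C <= nu <= C &
    forall nu' : R, (Mobj mu g ys nu' <= Mobj mu g ys nu)%E.
Proof.
have C0 : 0 <= C by apply: le_trans (gb (ys ord0)).
have mE : measurable_fun setT (fun y => (expR (g y))%:E).
  apply/measurable_EFinP; apply: measurableT_comp => //; exact: measurable_expR.
have mq : measurable_fun setT (fun y => (q y)%:E).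
  by apply/measurable_EFinP.
set Z := (\int[mu]_(y in setT) (expR (g y))%:E)%E.
have Zup : (Z <= (expR C)%:E)%E.
  have mq' : measurable_fun setT (fun y => (expR C)%:E * (q y)%:E)%E.
    exact: measurable_funeM.
  apply: le_trans (@ge0_le_integral _ _ _ mu setT measurableT _
     (fun y => (expR C)%:E * (q y)%:E)%E _ mE mq' _) _.
  - by move=> y _; rewrite lee_fin ltW // expR_gt0.
  - move=> y _; rewrite -EFinM lee_fin.
    have /andP[_ h] := @Ebound _ _ _ _ 0 (q_pos y) (gb y).
    by rewrite !addr0 mulrC in h.
  rewrite ge0_integralZl //; first by rewrite q_prob mule1.
  by move=> y _; rewrite lee_fin ltW.
have Zlo : ((expR (- C))%:E <= Z)%E.
  have mq' : measurable_fun setT (fun y => (expR (- C))%:E * (q y)%:E)%E.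
    exact: measurable_funeM.
  apply: le_trans _ (@ge0_le_integral _ _ _ mu setT measurableT
     (fun y => (expR (- C))%:E * (q y)%:E)%E _ _ mq' mE _).
  - rewrite ge0_integralZl //; first by rewrite q_prob mule1.
    by move=> y _; rewrite lee_fin ltW.
  - by move=> y _; rewrite -EFinM lee_fin mulr_ge0 // ltW // ?expR_gt0 ?q_pos.
  - move=> y _; rewrite -EFinM lee_fin.
    have /andP[h _] := @Ebound _ _ _ _ 0 (q_pos y) (gb y).
    by rewrite sub0r mulrC in h; rewrite addr0 in h.
have [z Zz] : exists z, Z = z%:E.
  move: Zlo Zup; case: Z => [r _ _| //| //]; by exists r.
rewrite Zz !lee_fin in Zlo Zup.
have z0 : 0 < z by apply: lt_le_trans (expR_gt0 _) Zlo.
have hint nu : (\int[mu]_(y in setT) (expR (g y + nu))%:E = (expR nu * z)%:E)%E.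
  under eq_integral do rewrite expRD mulrC EFinM.
  rewrite ge0_integralZl //; first by rewrite -/Z Zz -EFinM.
have hM nu : Mobj mu g ys nu =
    (\sum_(i < n.+1) g (ys i) + n.+1%:R * nu - n.+1%:R * (expR nu * z))%:E.
  rewrite /Mobj hint -EFinM -EFinB big_split /= sumr_const card_ord mulr_natl.
  by rewrite mulr_natl.
exists (- ln z).
  have h1 : ln z <= C by rewrite -(expRK C) ler_ln // posrE expR_gt0.
  have h2 : - C <= ln z by rewrite -(expRK (- C)) ler_ln // posrE expR_gt0.
  apply/andP; split; lra.
move=> nu'; rewrite !hM lee_fin.
have e1 : expR (- ln z) * z = 1 by rewrite expRN lnK ?posrE // mulVf // gt_eqF.
rewrite e1.
have h := expR_ge1Dx (nu' + ln z).
rewrite expRD lnK ?posrE // in h.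
have N0 : 0 <= n.+1%:R :> R by [].
nra.
Qed.

Theorem lemma1 (d : measure_display) (T : measurableType d) (R : realType)
  (mu : {measure set T -> \bar R}) (q : T -> R)
  (q_meas : measurable_fun setT q)
  (q_pos : forall y : T, 0 < q y)
  (q_prob : (\int[mu]_(y in setT) (q y)%:E = 1)%E)
  (Theta : Type) (f : Theta -> T -> R) (C : R)
  (f_meas : forall th : Theta, measurable_fun setT (f th))
  (f_bound : forall (th : Theta) (y : T), `|f th y - ln (q y)| <= C)
  (n : nat) (ys : 'I_n -> T) (m : nat) (m_ge1 : (1 <= m)%N) (rs : 'I_m -> T) :
  exists a b : R,
    forall th : Theta,
      (exists2 nu : R, a <= nu <= b &
         forall nu' : R, (Mobj mu (f th) ys nu' <= Mobj mu (f th) ys nu)%E)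
      /\
      (exists2 nu : R, a <= nu <= b &
         forall nu' : R, Rmobj q (f th) ys rs nu' <= Rmobj q (f th) ys rs nu).
Proof.
case: n ys => [|n] ys.
  exists 0, 0 => th; split; exists 0; rewrite ?lexx //.
    by move=> nu'; rewrite /Mobj !big_ord0 !mul0e.
  have h nu : Rmobj q (f th) ys rs nu = Rmobj q (f th) ys rs 0.
    rewrite /Rmobj !big_ord0; congr (_ + _); apply: eq_bigr => j _.
    by rewrite !mul0r.
  by move=> nu'; rewrite h.
case: m m_ge1 rs => [|m] // _ rs.
pose N := (n.+1)%:R : R; pose M := (m.+1)%:R : R.
pose K := N * ln (1 + M * expR C) + M * ln (1 + N * expR C).
exists (- (ln N + C + K)), (ln M + C + K) => th; split.
  have [nu hnu hmax] := @Mpart d T R mu q q_meas q_pos q_prob (f th) C (f_meas th) (f_bound th) n ys.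
  exists nu => //.
  have C0 : 0 <= C by apply: le_trans (f_bound th (ys ord0)).
  have N1 : 1 <= N by rewrite ler1n.
  have M1 : 1 <= M by rewrite ler1n.
  have eC : 0 < expR C := expR_gt0 C.
  have L1 : 0 <= ln (1 + M * expR C) by apply: ln_ge0; rewrite lerDl mulr_ge0 // ?ltW //; lra.
  have L2 : 0 <= ln (1 + N * expR C) by apply: ln_ge0; rewrite lerDl mulr_ge0 // ?ltW //; lra.
  have K0 : 0 <= K by rewrite /K addr_ge0 // mulr_ge0 //; lra.
  have lN : 0 <= ln N by apply: ln_ge0.
  have lM : 0 <= ln M by apply: ln_ge0.
  move: hnu => /andP[h1 h2]; apply/andP; split; lra.
exact: (@Rpart R T q (f th) C q_pos (f_bound th) n m ys rs).
Qed.
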